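(* For every max-min (unbounded space) algorithm $ALG$ for the classic bin packing problem and every positive integer $m$, there exists a sorted item sequence $I$ such that $OPT(I)>m$ and $ALG(I)>\frac{16}{15}\cdot(OPT(I)-1)$.
   Context: Classic bin packing: an item sequence $I=(a_1,\dots,a_n)\in(0,1]^n$ must be packed into bins of capacity $1$; $OPT(I)$ is the minimum number of non-empty bins, $ALG(I)$ the number of non-empty bins used by $ALG$. $I$ is sorted if $a_1\ge\cdots\ge a_n$. A max-min algorithm first sorts the input in non-increasing order and then repeatedly takes either the head (largest) or the tail (smallest) item of the currently remaining sorted sequence and packs it into some bin (any bin it can fit into, there being no limit on the number of open bins), each decision depending only on the items already packed and the current head and tail items, without seeing any other remaining items (in particular, not how many items remain). *)

(* Defs.v *)
From Stdlib Require Import Reals List Arith Lia Sorting.Sorted.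
Open Scope R_scope.

Definition bin_load (I : list R) (f : nat -> nat) (b : nat) : R :=
  fold_right (fun j acc => (if Nat.eqb (f j) b then nth j I 0 else 0) + acc)
             0 (seq 0 (length I)).

Definition feasible (I : list R) (k : nat) : Prop :=
  exists f : nat -> nat,
    (forall j, (j < length I)%nat -> (f j < k)%nat) /\
    (forall b, (b < k)%nat -> bin_load I f b <= 1).

Definition is_OPT (I : list R) (k : nat) : Prop :=
  feasible I k /\ forall k', feasible I k' -> (k <= k')%nat.

(** History of the packing so far, in chronological order:
    (size of packed item, index of the bin it went to).
    Bins are numbered 0,1,2,... in order of opening. *)
Definition history := list (R * nat).

Definition nbins (h : history) : nat :=
  fold_right (fun p acc => Nat.max (S (snd p)) acc) 0%nat h.

Definition load (h : history) (i : nat) : R :=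
  fold_right (fun p acc => (if Nat.eqb (snd p) i then fst p else 0) + acc) 0 h.

(** A max-min algorithm: given the history of packed items, the current head
    (largest remaining) and the current tail (smallest remaining) item, it
    decides whether to pack the head ([true]) or the tail ([false]) and into
    which bin: an index [< nbins h] designates an existing bin, any other
    index means "open a new bin". *)
Definition maxmin_alg := history -> R -> R -> bool * nat.

Definition chosen (d : bool * nat) (a t : R) : R := if fst d then a else t.

Definition valid_alg (A : maxmin_alg) : Prop :=
  forall (h : history) (a t : R),
    (snd (A h a t) < nbins h)%nat ->
    load h (snd (A h a t)) + chosen (A h a t) a t <= 1.

Fixpoint run (A : maxmin_alg) (fuel : nat) (r : list R) (h : history) : history :=
  match fuel with
  | O => h
  | S fuel' =>
    match r with
    | nil => h
    | a :: _ =>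
      let t := last r 0 in
      let d := A h a t in
      let it := chosen d a t in
      let r' := if fst d then tl r else removelast r in
      let bin := if Nat.ltb (snd d) (nbins h) then snd d else nbins h in
      run A fuel' r' (h ++ (it, bin) :: nil)
    end
  end.

(** ALG(I): number of (non-empty) bins used; the input is sorted first,
    here I is assumed already sorted non-increasingly. *)
Definition ALG (A : maxmin_alg) (I : list R) : nat :=
  nbins (run A (length I) I nil).

Definition sorted_input (I : list R) : Prop := Sorted Rge I.
Definition valid_items (I : list R) : Prop := Forall (fun x => 0 < x <= 1) I.

(* Main.v *)
Require Import Defs.
From Stdlib Require Import Reals List Arith Lia Lra Permutation Sorting.Sorted Classical Wf_nat.
Open Scope R_scope.

Definition B0 : R := 2/5.
Definition S0 : R := 3/10.
Definition M0 : R := 7/20.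

Lemma BS_neq : B0 <> S0. Proof. unfold B0, S0; lra. Qed.
Lemma BM_neq : B0 <> M0. Proof. unfold B0, M0; lra. Qed.
Lemma SM_neq : S0 <> M0. Proof. unfold S0, M0; lra. Qed.

Definition ind (b : bool) : nat := if b then 1%nat else 0%nat.

Fixpoint cnt (z : R) (h : history) : nat :=
  match h with
  | nil => 0%nat
  | e :: h' => ((if Req_dec_T (fst e) z then 1 else 0) + cnt z h')%nat
  end.

Fixpoint cbin (z : R) (h : history) (i : nat) : nat :=
  match h with
  | nil => 0%nat
  | e :: h' => ((if Req_dec_T (fst e) z then ind (Nat.eqb (snd e) i) else 0) + cbin z h' i)%nat
  end.

Lemma cnt_app z h1 h2 : cnt z (h1 ++ h2) = (cnt z h1 + cnt z h2)%nat.
Proof. induction h1; simpl; lia. Qed.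

Lemma cbin_app z h1 h2 i : cbin z (h1 ++ h2) i = (cbin z h1 i + cbin z h2 i)%nat.
Proof. induction h1; simpl; lia. Qed.

Lemma load_app h1 h2 i : load (h1 ++ h2) i = load h1 i + load h2 i.
Proof. induction h1; simpl. ring. rewrite IHh1. ring. Qed.

Lemma nbins_cons a h : nbins (a :: h) = Nat.max (S (snd a)) (nbins h).
Proof. reflexivity. Qed.
Lemma nbins_nil : nbins nil = 0%nat.
Proof. reflexivity. Qed.

Lemma nbins_app h1 h2 : nbins (h1 ++ h2) = Nat.max (nbins h1) (nbins h2).
Proof. induction h1. reflexivity. rewrite <- app_comm_cons, !nbins_cons, IHh1. lia. Qed.

Lemma nbins_spec h : forall e, In e h -> (snd e < nbins h)%nat.
Proof.
  induction h; intros e He. contradiction.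
  rewrite nbins_cons. destruct He as [<-|He]. lia. specialize (IHh e He). lia.
Qed.

Lemma load_out h i : (nbins h <= i)%nat -> load h i = 0.
Proof.
  induction h; intros Hi. reflexivity.
  rewrite nbins_cons in Hi. simpl. rewrite IHh by lia. destruct (Nat.eqb_spec (snd a) i). lia. lra.
Qed.

Lemma cbin_out z h i : (nbins h <= i)%nat -> cbin z h i = 0%nat.
Proof.
  induction h; intros Hi. reflexivity.
  rewrite nbins_cons in Hi. simpl. rewrite IHh by lia. destruct (Req_dec_T (fst a) z); simpl; auto.
  destruct (Nat.eqb_spec (snd a) i). lia. reflexivity.
Qed.

Fixpoint sumn (K : nat) (g : nat -> nat) : nat :=
  match K with O => O | S K' => (sumn K' g + g K')%nat end.

Lemma sumn_le K g g' : (forall i, (i < K)%nat -> (g i <= g' i)%nat) -> (sumn K g <= sumn K g')%nat.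
Proof. induction K; simpl; intros H. lia. pose proof (H K ltac:(lia)). assert (sumn K g <= sumn K g')%nat by (apply IHK; intros; apply H; lia). lia.
Qed.

Lemma sumn_ext K g g' : (forall i, (i < K)%nat -> g i = g' i) -> sumn K g = sumn K g'.
Proof. induction K; simpl; intros H. auto. rewrite IHK by (intros; apply H; lia). rewrite H by lia. auto. Qed.

Lemma sumn_add K g g' : sumn K (fun i => g i + g' i)%nat = (sumn K g + sumn K g')%nat.
Proof. induction K; simpl; lia. Qed.

Lemma sumn_mul K c g : sumn K (fun i => c * g i)%nat = (c * sumn K g)%nat.
Proof. induction K; simpl; lia. Qed.

Lemma sumn_const K c : sumn K (fun _ => c) = (K * c)%nat.
Proof. induction K; simpl; lia. Qed.

Lemma sumn_split K d g : sumn (K + d) g = (sumn K g + sumn d (fun j => g (K + j)%nat))%nat.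
Proof. induction d; simpl. rewrite Nat.add_0_r; lia. rewrite Nat.add_succ_r. simpl. rewrite IHd. lia. Qed.

Lemma sumn_ind_eq K j : (j < K)%nat -> sumn K (fun i => ind (Nat.eqb j i)) = 1%nat.
Proof.
  induction K; simpl; intros H. lia.
  destruct (Nat.eqb_spec j K).
  - subst. rewrite (sumn_ext K _ (fun _ => 0%nat)). rewrite sumn_const. simpl. lia.
    intros i Hi. destruct (Nat.eqb_spec K i). lia. reflexivity.
  - rewrite IHK by lia. simpl. lia.
Qed.

Lemma sumn_cbin z h K : (forall e, In e h -> (snd e < K)%nat) -> sumn K (cbin z h) = cnt z h.
Proof.
  induction h; simpl; intros H.
  - rewrite sumn_const. lia.
  - rewrite sumn_add. rewrite IHh by auto.
    destruct (Req_dec_T (fst a) z).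
    + rewrite sumn_ind_eq by auto. reflexivity.
    + rewrite sumn_const. lia.
Qed.
Definition bin_of (h : history) (d : bool * nat) : nat :=
  if Nat.ltb (snd d) (nbins h) then snd d else nbins h.

Lemma load_single it b i : load ((it, b) :: nil) i = if Nat.eqb b i then it else 0.
Proof. unfold load; simpl. destruct (Nat.eqb b i); ring. Qed.

Lemma step_load (A : maxmin_alg) h a t :
  valid_alg A -> (forall i, load h i <= 1) ->
  0 < chosen (A h a t) a t <= 1 ->
  forall i, load (h ++ (chosen (A h a t) a t, bin_of h (A h a t)) :: nil) i <= 1.
Proof.
  intros HA Hh Hc i. rewrite load_app, load_single. unfold bin_of.
  destruct (Nat.ltb_spec (snd (A h a t)) (nbins h)) as [Hlt|Hge].
  - destruct (Nat.eqb_spec (snd (A h a t)) i) as [<-|]. apply HA; auto.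
    specialize (Hh i); lra.
  - destruct (Nat.eqb_spec (nbins h) i) as [<-|].
    rewrite load_out by lia. lra. specialize (Hh i); lra.
Qed.

Lemma last_split (l : list R) : l <> nil -> l = removelast l ++ last l 0 :: nil.
Proof. intros H. apply app_removelast_last. auto. Qed.

Lemma run_inv (A : maxmin_alg) f : valid_alg A -> forall r h,
  (length r <= f)%nat -> Forall (fun a => 0 < a <= 1) r -> (forall i, load h i <= 1) ->
  exists new, run A f r h = h ++ new /\ Permutation (map fst new) r /\
              (forall i, load (h ++ new) i <= 1).
Proof.
  intros HA. induction f; intros r h Hlen Hr Hh.
  - destruct r; simpl in Hlen; [|lia]. exists nil. simpl. rewrite app_nil_r. auto.
  - destruct r as [|a r0].
    + exists nil. simpl. rewrite app_nil_r. auto.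
    + cbn [run].
      set (t := last (a :: r0) 0).
      assert (Hne : a :: r0 <> nil) by discriminate.
      pose proof (last_split _ Hne) as Hsplit. fold t in Hsplit.
      assert (Hr2 := Hr). rewrite Hsplit in Hr2. apply Forall_app in Hr2. destruct Hr2 as [Hrl Hrt].
      inversion Hrt; subst.
      assert (Hlenrl : length (removelast (a :: r0)) = length r0).
      { assert (E := f_equal (@length R) Hsplit). rewrite length_app in E. cbn [length] in E. lia. }
      inversion Hr; subst.
      set (d := A h a t).
      assert (Hc : 0 < chosen d a t <= 1).
      { unfold chosen. destruct (fst d); auto. }
      assert (Hload := step_load A h a t HA Hh Hc).
      fold d in Hload. unfold bin_of in Hload.
      destruct (fst d) eqn:Hd.
      * destruct (IHf r0 _ ltac:(simpl in Hlen; lia) H4 Hload) as [new [E1 [E2 E3]]].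
        exists ((chosen d a t, if Nat.ltb (snd d) (nbins h) then snd d else nbins h) :: new).
        simpl tl. rewrite E1. rewrite <- app_assoc. simpl. split; [reflexivity|].
        split. unfold chosen. rewrite Hd. simpl. apply perm_skip. auto.
        rewrite <- app_assoc in E3. exact E3.
      * destruct (IHf (removelast (a :: r0)) _ ltac:(simpl in Hlen; lia) Hrl Hload) as [new [E1 [E2 E3]]].
        exists ((chosen d a t, if Nat.ltb (snd d) (nbins h) then snd d else nbins h) :: new).
        rewrite E1. rewrite <- app_assoc. simpl. split; [reflexivity|].
        split. unfold chosen. rewrite Hd. simpl.
        eapply Permutation_trans. apply perm_skip. exact E2.
        rewrite Hsplit at 2. apply Permutation_cons_append.
        rewrite <- app_assoc in E3. exact E3.
Qed.
Fixpoint sim (A : maxmin_alg) (n : nat) : history :=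
  match n with
  | O => nil
  | S n' => sim A n' ++ (chosen (A (sim A n') B0 S0) B0 S0, bin_of (sim A n') (A (sim A n') B0 S0)) :: nil
  end.

Lemma repeat_S_r (x : R) n : repeat x (S n) = repeat x n ++ x :: nil.
Proof. induction n; simpl. reflexivity. simpl in IHn. rewrite IHn. reflexivity. Qed.

Lemma cnt_single z c b : cnt z ((c, b) :: nil) = if Req_dec_T c z then 1%nat else 0%nat.
Proof. simpl. destruct (Req_dec_T c z); reflexivity. Qed.

Lemma chosen_BS d : chosen d B0 S0 = B0 \/ chosen d B0 S0 = S0.
Proof. unfold chosen. destruct (fst d); auto. Qed.

Lemma B0_pos : 0 < B0 <= 1. Proof. unfold B0; lra. Qed.
Lemma S0_pos : 0 < S0 <= 1. Proof. unfold S0; lra. Qed.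
Lemma M0_pos : 0 < M0 <= 1. Proof. unfold M0; lra. Qed.

Lemma sim_props A n : valid_alg A ->
  (cnt B0 (sim A n) + cnt S0 (sim A n) = n)%nat /\
  (forall e, In e (sim A n) -> fst e = B0 \/ fst e = S0) /\
  (forall i, load (sim A n) i <= 1).
Proof.
  intros HA. induction n.
  - simpl. split; [reflexivity|]. split. intros e []. intros i. unfold load; simpl; lra.
  - destruct IHn as [H1 [H2 H3]]. cbn [sim]. split; [|split].
    + rewrite !cnt_app, !cnt_single.
      destruct (chosen_BS (A (sim A n) B0 S0)) as [E|E]; rewrite E.
      * destruct (Req_dec_T B0 B0); [|congruence]. destruct (Req_dec_T B0 S0). exfalso; apply BS_neq; auto. lia.
      * destruct (Req_dec_T S0 S0); [|congruence]. destruct (Req_dec_T S0 B0). exfalso; apply BS_neq; auto. lia.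
    + intros e He. apply in_app_or in He. destruct He as [He|[<-|[]]]. auto. apply chosen_BS.
    + apply step_load; auto.
      destruct (chosen_BS (A (sim A n) B0 S0)) as [E|E]; rewrite E. apply B0_pos. apply S0_pos.
Qed.

Lemma run_step_BS A fuel h p' q' mid :
  run A (S fuel) (repeat B0 (S p') ++ mid ++ repeat S0 (S q')) h =
  run A fuel (if fst (A h B0 S0) then repeat B0 p' ++ mid ++ repeat S0 (S q')
              else repeat B0 (S p') ++ mid ++ repeat S0 q')
     (h ++ (chosen (A h B0 S0) B0 S0, bin_of h (A h B0 S0)) :: nil).
Proof.
  change (repeat B0 (S p')) with (B0 :: repeat B0 p').
  rewrite <- app_comm_cons.
  assert (EL : B0 :: repeat B0 p' ++ mid ++ repeat S0 (S q') =
               (B0 :: repeat B0 p' ++ mid ++ repeat S0 q') ++ S0 :: nil).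
  { rewrite repeat_S_r. simpl. rewrite !app_assoc. reflexivity. }
  assert (Hl : last (B0 :: repeat B0 p' ++ mid ++ repeat S0 (S q')) 0 = S0).
  { rewrite EL. apply last_last. }
  assert (Hr : removelast (B0 :: repeat B0 p' ++ mid ++ repeat S0 (S q')) = B0 :: repeat B0 p' ++ mid ++ repeat S0 q').
  { rewrite EL. apply removelast_last. }
  cbn [run]. rewrite Hl, Hr. cbn [tl].
  unfold bin_of. destruct (fst (A h B0 S0)); reflexivity.
Qed.
Lemma cnt_sim_S A n z :
  cnt z (sim A (S n)) = (cnt z (sim A n) + if Req_dec_T (chosen (A (sim A n) B0 S0) B0 S0) z then 1 else 0)%nat.
Proof. cbn [sim]. rewrite cnt_app, cnt_single. reflexivity. Qed.

Lemma sim_run A n : forall fuel p q mid,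
  (cnt B0 (sim A n) < p)%nat -> (cnt S0 (sim A n) < q)%nat ->
  run A (n + fuel) (repeat B0 p ++ mid ++ repeat S0 q) nil =
  run A fuel (repeat B0 (p - cnt B0 (sim A n)) ++ mid ++ repeat S0 (q - cnt S0 (sim A n))) (sim A n).
Proof.
  induction n; intros fuel p q mid Hp Hq.
  - simpl. rewrite !Nat.sub_0_r. reflexivity.
  - rewrite cnt_sim_S in Hp, Hq.
    replace (S n + fuel)%nat with (n + S fuel)%nat by lia.
    rewrite IHn by lia.
    set (b := cnt B0 (sim A n)) in *. set (s := cnt S0 (sim A n)) in *.
    replace (p - b)%nat with (S (p - b - 1)) by lia.
    replace (q - s)%nat with (S (q - s - 1)) by lia.
    rewrite run_step_BS.
    rewrite !cnt_sim_S. fold b s.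
    cbn [sim].
    unfold chosen. destruct (fst (A (sim A n) B0 S0)).
    + destruct (Req_dec_T B0 B0); [|congruence]. destruct (Req_dec_T B0 S0). exfalso; apply BS_neq; auto.
      replace (p - (b + 1))%nat with (p - b - 1)%nat by lia. rewrite Nat.add_0_r. replace (S (q - s - 1)) with (q - s)%nat by lia. reflexivity.
    + destruct (Req_dec_T S0 S0); [|congruence]. destruct (Req_dec_T S0 B0). exfalso; apply BS_neq; auto.
      replace (q - (s + 1))%nat with (q - s - 1)%nat by lia. rewrite Nat.add_0_r. replace (S (p - b - 1)) with (p - b)%nat by lia. reflexivity.
Qed.
Lemma INR_ind b : INR (ind b) = if b then 1 else 0.
Proof. destruct b; reflexivity. Qed.

Lemma load_ge h i : (forall e, In e h -> 0 <= fst e) ->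
  B0 * INR (cbin B0 h i) + S0 * INR (cbin S0 h i) + M0 * INR (cbin M0 h i) <= load h i.
Proof.
  induction h as [|e h IH]; intros Hpos.
  - simpl. unfold load; simpl. lra.
  - cbn [cbin]. unfold load; cbn [fold_right]. fold (load h i).
    rewrite !plus_INR.
    assert (IH' := IH (fun e' He' => Hpos e' (or_intror He'))).
    assert (He := Hpos e (or_introl eq_refl)).
    destruct (Req_dec_T (fst e) B0) as [EB|NB];
    destruct (Req_dec_T (fst e) S0) as [ES|NS];
    destruct (Req_dec_T (fst e) M0) as [EM|NM];
    try (exfalso; rewrite EB in *; unfold B0, S0, M0 in *; lra);
    try (exfalso; rewrite ES in *; unfold B0, S0, M0 in *; lra);
    rewrite ?INR_ind; destruct (Nat.eqb (snd e) i); simpl INR; try rewrite EB; try rewrite ES; try rewrite EM; lra.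
Qed.

Lemma INR_20 : INR 20 = 20. Proof. simpl. lra. Qed.

Lemma bin_nat b s c : B0 * INR b + S0 * INR s + M0 * INR c <= 1 -> (8*b + 6*s + 7*c <= 20)%nat.
Proof.
  intros H. apply INR_le. rewrite !plus_INR, !mult_INR, INR_20.
  replace (INR 8) with 8 by (simpl; lra). replace (INR 6) with 6 by (simpl; lra).
  replace (INR 7) with 7 by (simpl; lra). unfold B0, S0, M0 in H. lra.
Qed.

Lemma final_bin (hT new : history) i :
  (forall e, In e hT -> fst e = B0 \/ fst e = S0) ->
  (forall e, In e new -> 0 < fst e) ->
  load (hT ++ new) i <= 1 ->
  (8 * cbin B0 hT i + 6 * (cbin S0 hT i + cbin S0 new i) + 7 * cbin M0 new i <= 20)%nat.
Proof.
  intros HT Hn Hl.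
  assert (Hpos : forall e, In e (hT ++ new) -> 0 <= fst e).
  { intros e He. apply in_app_or in He. destruct He as [He|He].
    destruct (HT e He) as [E|E]; rewrite E; unfold B0, S0; lra. specialize (Hn e He); lra. }
  pose proof (load_ge _ i Hpos) as G.

  assert (X : (8 * cbin B0 (hT ++ new) i + 6 * cbin S0 (hT ++ new) i + 7 * cbin M0 (hT ++ new) i <= 20)%nat).
  { apply bin_nat. lra. }
  rewrite !cbin_app in X. lia.
Qed.

Definition kS (b s : nat) : nat := (20 - (8*b + 6*s)) / 6.
Definition kM (b s : nat) : nat := (20 - (8*b + 6*s)) / 7.

Lemma kS_bound b s c : (8*b + 6*(s + c) <= 20)%nat -> (c <= kS b s)%nat.
Proof. intros H. unfold kS. apply Nat.div_le_lower_bound. lia. lia. Qed.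
Lemma kM_bound b s c : (8*b + 6*s + 7*c <= 20)%nat -> (c <= kM b s)%nat.
Proof. intros H. unfold kM. apply Nat.div_le_lower_bound. lia. lia. Qed.

Definition pat_sum (N : nat -> nat -> nat) (F : nat -> nat -> nat) : nat :=
  (N 0 0 * F 0 0 + N 1 0 * F 1 0 + N 2 0 * F 2 0 + N 0 1 * F 0 1 + N 0 2 * F 0 2
   + N 0 3 * F 0 3 + N 1 1 * F 1 1 + N 1 2 * F 1 2)%nat.

Definition Npat (K : nat) (b s : nat -> nat) (pb ps : nat) : nat :=
  sumn K (fun i => ind (Nat.eqb (b i) pb && Nat.eqb (s i) ps)).

Lemma decomp K (b s : nat -> nat) (F : nat -> nat -> nat) :
  (forall i, (i < K)%nat -> (8 * b i + 6 * s i <= 20)%nat) ->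
  sumn K (fun i => F (b i) (s i)) = pat_sum (Npat K b s) F.
Proof.
  induction K; intros H.
  - reflexivity.
  - unfold pat_sum, Npat in *. cbn [sumn]. rewrite IHK by (intros; apply H; lia).
    assert (HK := H K ltac:(lia)).
    destruct (b K) as [|[|[|bb]]]; destruct (s K) as [|[|[|[|ss]]]]; cbn; try lia; ring.
Qed.
Definition sumR (l : list R) : R := fold_right Rplus 0 l.

Lemma map_nth_seq_id {T} (L : list T) (d : T) : map (fun j => nth j L d) (seq 0 (length L)) = L.
Proof.
  induction L as [|a L IH]. reflexivity.
  cbn [length seq map]. simpl nth at 1. f_equal.
  rewrite <- seq_shift, map_map. simpl. exact IH.
Qed.

Lemma load_map_seq (g : nat -> R * nat) l b :
  load (map g l) b = fold_right (fun j acc => (if Nat.eqb (snd (g j)) b then fst (g j) else 0) + acc) 0 l.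
Proof. induction l; simpl. reflexivity. unfold load in *. simpl. rewrite IHl. reflexivity. Qed.

Lemma bin_load_eq I f b :
  bin_load I f b = load (map (fun j => (nth j I 0, f j)) (seq 0 (length I))) b.
Proof. rewrite load_map_seq. reflexivity. Qed.

Lemma feasible_of_L I k (L : list (R * nat)) :
  map fst L = I -> (forall e, In e L -> (snd e < k)%nat) -> (forall b, load L b <= 1) -> feasible I k.
Proof.
  intros HI Hk Hl.
  exists (fun j => snd (nth j L (0, 0%nat))).
  assert (E : map (fun j => (nth j I 0, snd (nth j L (0, 0%nat)))) (seq 0 (length I)) = L).
  { subst I. rewrite length_map.
    rewrite <- (map_nth_seq_id L (0, 0%nat)) at 2. apply map_ext. intros j.
    change 0 with (fst (0, 0%nat)) at 1. rewrite map_nth. destruct (nth j L (0, 0%nat)); reflexivity. }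
  split.
  - intros j Hj. apply Hk. apply nth_In. subst I. rewrite length_map in Hj. exact Hj.
  - intros b _. rewrite bin_load_eq, E. apply Hl.
Qed.

Fixpoint sumRk (k : nat) (g : nat -> R) : R :=
  match k with O => 0 | S k' => sumRk k' g + g k' end.

Lemma sumRk_add k g g' : sumRk k (fun i => g i + g' i) = sumRk k g + sumRk k g'.
Proof. induction k; simpl. ring. rewrite IHk. ring. Qed.

Lemma sumRk_ind k j c : sumRk k (fun i => if Nat.eqb j i then c else 0) = if Nat.ltb j k then c else 0.
Proof.
  induction k; simpl. destruct j; reflexivity.
  rewrite IHk. destruct (Nat.eqb_spec j k); destruct (Nat.ltb_spec j k); destruct (Nat.ltb_spec j (S k)); try lia; ring.
Qed.

Lemma sumRk_le1 k g : (forall i, g i <= 1) -> sumRk k g <= INR k.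
Proof. induction k; cbn [sumRk]; intros H. simpl; lra. rewrite S_INR. pose proof (H k). specialize (IHk H). lra. Qed.

Lemma sumRk_load L k : (forall e, In e L -> (snd e < k)%nat) -> sumRk k (load L) = sumR (map fst L).
Proof.
  induction L as [|e L IH]; intros H.
  - unfold load; simpl. clear H. induction k; simpl. reflexivity. rewrite IHk. ring.
  - unfold load at 1. simpl (fold_right _ _ (e :: L)).
    change (sumRk k (fun i => (if Nat.eqb (snd e) i then fst e else 0) + load L i) = sumR (map fst (e :: L))).
    rewrite sumRk_add, sumRk_ind, IH by (intros; apply H; simpl; auto).
    assert (He := H e (or_introl eq_refl)). destruct (Nat.ltb_spec (snd e) k); [|lia].
    simpl. reflexivity.
Qed.

Lemma feasible_volume I k : feasible I k -> sumR I <= INR k.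
Proof.
  intros [f [Hf Hl]].
  set (L := map (fun j => (nth j I 0, f j)) (seq 0 (length I))).
  assert (HL : map fst L = I).
  { unfold L. rewrite map_map. simpl. apply map_nth_seq_id. }
  assert (Hk : forall e, In e L -> (snd e < k)%nat).
  { intros e He. unfold L in He. apply in_map_iff in He. destruct He as [j [<- Hj]].
    apply in_seq in Hj. simpl. apply Hf. lia. }
  rewrite <- HL, <- (sumRk_load L k Hk).
  (* loads <= 1 only for b < k; build bound *)
  assert (forall n, (n <= k)%nat -> sumRk n (load L) <= INR n).
  { induction n; intros Hn; cbn [sumRk]. simpl; lra. rewrite S_INR.
    assert (load L n <= 1). { unfold L. rewrite <- bin_load_eq. apply Hl. lia. }
    specialize (IHn ltac:(lia)). lra. }
  apply H. lia.
Qed.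

Lemma load_perm L L' b : Permutation L L' -> load L b = load L' b.
Proof.
  induction 1; unfold load in *; simpl; lra.
Qed.

Fixpoint lab (G : list (list R)) (s : nat) : list (R * nat) :=
  match G with nil => nil | g :: G' => map (fun a => (a, s)) g ++ lab G' (S s) end.

Lemma load_map_lab g s b : load (map (fun a => (a, s)) g) b = if Nat.eqb s b then sumR g else 0.
Proof. induction g; unfold load in *; simpl in *. destruct (Nat.eqb s b); reflexivity.
  rewrite IHg. destruct (Nat.eqb s b); unfold sumR; simpl; ring. Qed.

Lemma lab_props G : forall s, map fst (lab G s) = concat G /\
  (forall e, In e (lab G s) -> (s <= snd e < s + length G)%nat) /\
  (Forall (fun g => sumR g <= 1) G -> forall b, load (lab G s) b <= 1) /\
  (forall b, (b < s)%nat -> load (lab G s) b = 0).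
Proof.
  induction G as [|g G IH]; intros s.
  - simpl. split; [reflexivity|]. split. intros e []. split; intros; unfold load; simpl; lra.
  - destruct (IH (S s)) as [H1 [H2 [H3 H4]]]. cbn [lab concat length]. split; [|split; [|split]].
    + rewrite map_app, H1, map_map. simpl. rewrite map_id. reflexivity.
    + intros e He. apply in_app_or in He. destruct He as [He|He].
      apply in_map_iff in He. destruct He as [a [<- _]]. simpl. lia.
      specialize (H2 e He). lia.
    + intros HF b. inversion HF; subst. rewrite load_app, load_map_lab.
      destruct (Nat.eqb_spec s b). subst. rewrite H4 by lia. lra.
      specialize (H3 H6 b). lra.
    + intros b Hb. rewrite load_app, load_map_lab, H4 by lia.
      destruct (Nat.eqb_spec s b). lia. ring.
Qed.

Lemma feasible_groups I (G : list (list R)) :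
  Forall (fun g => sumR g <= 1) G -> Permutation (concat G) I -> feasible I (length G).
Proof.
  intros HF HP. destruct (lab_props G 0) as [H1 [H2 [H3 _]]].
  assert (HP' : Permutation I (map fst (lab G 0))). { rewrite H1. symmetry. exact HP. }
  destruct (Permutation_map_inv _ _ HP') as [L' [EI HL']].
  apply (feasible_of_L I (length G) L').
  - symmetry; exact EI.
  - intros e He. apply (Permutation_in _ (Permutation_sym HL')) in He. specialize (H2 e He). lia.
  - intros b. rewrite <- (load_perm _ _ b HL'). apply H3. exact HF.
Qed.

Lemma opt_exists I n : feasible I n -> exists k, is_OPT I k /\ (k <= n)%nat.
Proof.
  intros H.
  destruct (dec_inh_nat_subset_has_unique_least_element (feasible I)
              (fun n => classic (feasible I n)) (ex_intro _ n H)) as [k [[Hk Hmin] _]].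
  exists k. split. split; auto. apply Hmin. exact H.
Qed.
Definition inst (p r q : nat) : list R := repeat B0 p ++ repeat M0 r ++ repeat S0 q.

Lemma length_inst p r q : length (inst p r q) = (p + r + q)%nat.
Proof. unfold inst. rewrite !length_app, !repeat_length. lia. Qed.

Lemma Forall_rep {T} (P : T -> Prop) a n : P a -> Forall P (repeat a n).
Proof. intros H. induction n; simpl; constructor; auto. Qed.

Lemma valid_inst p r q : valid_items (inst p r q).
Proof.
  unfold valid_items, inst. rewrite !Forall_app. split; [|split]; apply Forall_rep.
  apply B0_pos. apply M0_pos. apply S0_pos.
Qed.

Lemma inst_pos p r q : Forall (fun a => 0 < a <= 1) (inst p r q).
Proof. apply valid_inst. Qed.

Lemma sorted_rep_app (a : R) n l : Sorted Rge l -> (forall z, In z l -> z <= a) -> Sorted Rge (repeat a n ++ l).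
Proof.
  intros Hl Hz. induction n.
  - exact Hl.
  - simpl. constructor. exact IHn.
    destruct n.
    + simpl. destruct l as [|b l]. constructor. constructor. apply Rle_ge. apply Hz. simpl; auto.
    + simpl. constructor. apply Rge_refl.
Qed.

Lemma sorted_inst p r q : sorted_input (inst p r q).
Proof.
  unfold sorted_input, inst.
  apply sorted_rep_app.
  - apply sorted_rep_app.
    + rewrite <- (app_nil_r (repeat S0 q)). apply sorted_rep_app. constructor. intros z [].
    + intros z Hz. apply repeat_spec in Hz. subst. unfold S0, M0; lra.
  - intros z Hz. apply in_app_or in Hz. destruct Hz as [Hz|Hz]; apply repeat_spec in Hz; subst; unfold S0, M0, B0; lra.
Qed.

Lemma sumR_app l1 l2 : sumR (l1 ++ l2) = sumR l1 + sumR l2.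
Proof. induction l1; unfold sumR in *; simpl. ring. rewrite IHl1. ring. Qed.

Lemma sumR_ge (c : R) l : Forall (fun a => c <= a) l -> c * INR (length l) <= sumR l.
Proof.
  induction 1. simpl. unfold sumR; simpl. lra.
  cbn [length]. rewrite S_INR. unfold sumR in *. cbn [fold_right]. lra.
Qed.

Lemma inst_ge p r q : Forall (fun a => 3/10 <= a) (inst p r q).
Proof.
  unfold inst. rewrite !Forall_app. split; [|split]; apply Forall_rep; unfold B0, M0, S0; lra.
Qed.

Lemma count_rep (a z : R) n : count_occ Req_dec_T (repeat a n) z = if Req_dec_T a z then n else 0%nat.
Proof. destruct (Req_dec_T a z). apply count_occ_repeat_eq; auto. apply count_occ_repeat_neq; auto. Qed.

Lemma count_concat_rep (g : list R) n z :
  count_occ Req_dec_T (concat (repeat g n)) z = (n * count_occ Req_dec_T g z)%nat.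
Proof. induction n; simpl. reflexivity. rewrite count_occ_app, IHn. lia. Qed.

Lemma cnt_count z h : cnt z h = count_occ Req_dec_T (map fst h) z.
Proof. induction h; simpl. reflexivity. rewrite IHh. destruct (Req_dec_T (fst a) z); reflexivity. Qed.

Lemma divmod_ex k n : (0 < k)%nat -> exists q r, n = (k * q + r)%nat /\ (r < k)%nat.
Proof. intros Hk. exists (n / k)%nat, (n mod k)%nat. split. apply Nat.div_mod. lia. apply Nat.mod_upper_bound. lia. Qed.

Ltac count_solve :=
  intros z; unfold inst;
  rewrite ?concat_app, ?count_occ_app, ?count_concat_rep, ?count_rep; cbn [concat count_occ app];
  rewrite ?app_nil_r, ?count_rep;
  destruct (Req_dec_T B0 z) as [EB|NB]; destruct (Req_dec_T S0 z) as [ES|NS];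
  destruct (Req_dec_T M0 z) as [EM|NM];
  try (exfalso; subst z; unfold B0, S0, M0 in *; lra); lia.

Ltac forall_solve :=
  rewrite ?Forall_app; repeat split; try apply Forall_rep; try (constructor; [|constructor]);
  unfold sumR; simpl; unfold B0, S0, M0; try lra.
Lemma pack_a0 X Y : (Y <= 2*X)%nat -> exists k, feasible (inst X 0 Y) k /\ (4*k <= 2*X + Y + 8)%nat.
Proof.
  intros H.
  destruct (divmod_ex 2 Y ltac:(lia)) as [u [e [HY He]]].
  destruct (divmod_ex 2 (X - u) ltac:(lia)) as [v [w [HX Hw]]].
  set (G := repeat (B0 :: S0 :: S0 :: nil) u ++ repeat (S0 :: nil) e ++ repeat (B0 :: B0 :: nil) v ++ repeat (B0 :: nil) w).
  exists (length G). split.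
  - apply feasible_groups. unfold G. forall_solve.
    apply (Permutation_count_occ Req_dec_T). unfold G. count_solve.
  - unfold G. rewrite !length_app, !repeat_length. lia.
Qed.

Lemma pack_a1 X Y : (2*X < Y)%nat -> exists k, feasible (inst X 0 Y) k /\ (3*k <= X + Y + 3)%nat.
Proof.
  intros H.
  destruct (divmod_ex 3 (Y - 2*X) ltac:(lia)) as [u [e [HY He]]].
  set (G := repeat (B0 :: S0 :: S0 :: nil) X ++ repeat (S0 :: S0 :: S0 :: nil) u ++ (repeat S0 e :: nil)).
  exists (length G). split.
  - apply feasible_groups. unfold G. rewrite !Forall_app. split; [|split].
    + apply Forall_rep. unfold sumR; simpl; unfold B0, S0; lra.
    + apply Forall_rep. unfold sumR; simpl; unfold B0, S0; lra.
    + constructor; [|constructor]. destruct e as [|[|[|e]]]; unfold sumR; simpl; unfold S0; try lra. lia.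
    + apply (Permutation_count_occ Req_dec_T). unfold G. count_solve.
  - unfold G. rewrite !length_app, !repeat_length. simpl. lia.
Qed.

Lemma pack_b X : feasible (inst X 0 (2*X)) X.
Proof.
  set (G := repeat (B0 :: S0 :: S0 :: nil) X).
  replace X with (length G) at 3 by (unfold G; apply repeat_length).
  apply feasible_groups. unfold G. forall_solve.
  apply (Permutation_count_occ Req_dec_T). unfold G. count_solve.
Qed.

Lemma pack_c X Y : exists k, feasible (inst X (2*Y) Y) k /\ (2*k <= 2*Y + X + 1)%nat.
Proof.
  destruct (divmod_ex 2 X ltac:(lia)) as [v [w [HX Hw]]].
  set (G := repeat (M0 :: M0 :: S0 :: nil) Y ++ repeat (B0 :: B0 :: nil) v ++ repeat (B0 :: nil) w).
  exists (length G). split.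
  - apply feasible_groups. unfold G. forall_solve.
    apply (Permutation_count_occ Req_dec_T). unfold G. count_solve.
  - unfold G. rewrite !length_app, !repeat_length. lia.
Qed.
Lemma scen A (HA : valid_alg A) T r q :
  (cnt S0 (sim A T) < q)%nat ->
  exists new,
    ALG A (inst (cnt B0 (sim A T) + 1) r q) = nbins (sim A T ++ new) /\
    Permutation (map fst new) (inst 1 r (q - cnt S0 (sim A T))) /\
    (forall i, load (sim A T ++ new) i <= 1).
Proof.
  intros Hq.
  destruct (sim_props A T HA) as [Hsum [Hin Hld]].
  unfold ALG. rewrite length_inst.
  replace (cnt B0 (sim A T) + 1 + r + q)%nat with (T + (1 + r + (q - cnt S0 (sim A T))))%nat by lia.
  unfold inst at 1. rewrite sim_run by lia.
  replace (cnt B0 (sim A T) + 1 - cnt B0 (sim A T))%nat with 1%nat by lia.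
  destruct (run_inv A (1 + r + (q - cnt S0 (sim A T))) HA (inst 1 r (q - cnt S0 (sim A T))) (sim A T))
    as [new [E1 [E2 E3]]].
  - rewrite length_inst. lia.
  - apply inst_pos.
  - exact Hld.
  - exists new. unfold inst in E1. rewrite E1. auto.
Qed.

Lemma scen_count hT new z (kf : nat -> nat -> nat) :
  (forall i, (cbin z new i <= kf (cbin B0 hT i) (cbin S0 hT i))%nat) ->
  (cnt z new <= sumn (nbins hT) (fun i => kf (cbin B0 hT i) (cbin S0 hT i))
               + (nbins (hT ++ new) - nbins hT) * kf 0%nat 0%nat)%nat.
Proof.
  intros H.
  set (Kf := nbins (hT ++ new)). set (K := nbins hT).
  assert (HKf : (K <= Kf)%nat) by (unfold K, Kf; rewrite nbins_app; lia).
  rewrite <- (sumn_cbin z new Kf).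
  2:{ intros e He. unfold Kf. apply nbins_spec. apply in_or_app. right. exact He. }
  eapply Nat.le_trans. apply (sumn_le Kf _ (fun i => kf (cbin B0 hT i) (cbin S0 hT i))). intros; apply H.
  replace Kf with (K + (Kf - K))%nat at 1 by lia. rewrite sumn_split.
  rewrite (sumn_ext (Kf - K) _ (fun _ => kf 0%nat 0%nat)). rewrite sumn_const. lia.
  intros j _. unfold K. rewrite !cbin_out by lia. reflexivity.
Qed.

Lemma pat_kS N : pat_sum N kS = (3 * N 0 0 + 2 * N 1 0 + 2 * N 0 1 + N 0 2 + N 1 1)%nat.
Proof. unfold pat_sum. cbn. lia. Qed.
Lemma pat_kM N : pat_sum N kM = (2 * N 0 0 + N 1 0 + 2 * N 0 1 + N 0 2)%nat.
Proof. unfold pat_sum. cbn. lia. Qed.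
Lemma pat_one N : pat_sum N (fun _ _ => 1%nat) = (N 0 0 + N 1 0 + N 2 0 + N 0 1 + N 0 2 + N 0 3 + N 1 1 + N 1 2)%nat.
Proof. unfold pat_sum. lia. Qed.
Lemma pat_b N : pat_sum N (fun b _ => b) = (N 1 0 + 2 * N 2 0 + N 1 1 + N 1 2)%nat.
Proof. unfold pat_sum. lia. Qed.
Lemma pat_s N : pat_sum N (fun _ s => s) = (N 0 1 + 2 * N 0 2 + 3 * N 0 3 + N 1 1 + 2 * N 1 2)%nat.
Proof. unfold pat_sum. lia. Qed.

Lemma opt_big I k n : is_OPT I k -> Forall (fun a => 3/10 <= a) I -> (4*n + 2 <= length I)%nat -> (n < k)%nat.
Proof.
  intros [Hf _] HI Hlen.
  pose proof (feasible_volume I k Hf) as V.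
  pose proof (sumR_ge (3/10) I HI) as G.
  apply le_INR in Hlen. rewrite plus_INR, mult_INR in Hlen. replace (INR 4) with 4 in Hlen by (simpl; lra).
  replace (INR 2) with 2 in Hlen by (simpl; lra).
  apply INR_lt. pose proof (pos_INR n). lra.
Qed.

Lemma real_conv K k : (16*k < 15*K + 16)%nat -> INR K > 16/15 * (INR k - 1).
Proof.
  intros H. apply lt_INR in H. rewrite plus_INR, !mult_INR in H.
  replace (INR 16) with 16 in H by (simpl; lra). replace (INR 15) with 15 in H by (simpl; lra). lra.
Qed.

Lemma core (N00 N10 N20 N01 N02 N03 N11 N12 K x y Ka ka Kb kb Kc kc : nat) :
  K = (N00+N10+N20+N01+N02+N03+N11+N12)%nat ->
  x = (N10 + 2*N20 + N11 + N12)%nat ->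
  y = (N01 + 2*N02 + 3*N03 + N11 + 2*N12)%nat ->
  (x + y >= 400)%nat ->
  (K <= Ka)%nat -> (K <= Kb)%nat -> (K <= Kc)%nat ->
  ((y <= 2*x+1)%nat -> (4*ka <= 2*(x+1) + (y+1) + 8)%nat) ->
  ((2*x+1 < y)%nat -> (3*ka <= x+y+5)%nat) ->
  ((y <= 2*x+1)%nat -> (2*x+2-y <= 3*N00 + 2*N10 + 2*N01 + N02 + N11 + 3*(Kb-K))%nat) ->
  ((y <= 2*x+1)%nat -> (kb <= x+1)%nat) ->
  (2*y+2 <= 2*N00 + N10 + 2*N01 + N02 + 2*(Kc-K))%nat ->
  (2*kc <= 2*(y+1) + (x+1) + 1)%nat ->
  (15*Ka+16 <= 16*ka)%nat -> (15*Kc+16 <= 16*kc)%nat ->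
  ((y <= 2*x+1)%nat -> (15*Kb+16 <= 16*kb)%nat) -> False.
Proof. intros. destruct (Nat.le_gt_cases y (2*x+1)); lia. Qed.
Lemma count_inst_B p r q : count_occ Req_dec_T (inst p r q) B0 = p.
Proof. unfold inst. rewrite !count_occ_app, !count_rep.
  destruct (Req_dec_T B0 B0); [|congruence]. destruct (Req_dec_T M0 B0). exfalso; apply BM_neq; auto.
  destruct (Req_dec_T S0 B0). exfalso; apply BS_neq; auto. lia. Qed.
Lemma count_inst_M p r q : count_occ Req_dec_T (inst p r q) M0 = r.
Proof. unfold inst. rewrite !count_occ_app, !count_rep.
  destruct (Req_dec_T M0 M0); [|congruence]. destruct (Req_dec_T B0 M0). exfalso; apply BM_neq; auto.
  destruct (Req_dec_T S0 M0). exfalso; apply SM_neq; auto. lia. Qed.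
Lemma count_inst_S p r q : count_occ Req_dec_T (inst p r q) S0 = q.
Proof. unfold inst. rewrite !count_occ_app, !count_rep.
  destruct (Req_dec_T S0 S0); [|congruence]. destruct (Req_dec_T B0 S0). exfalso; apply BS_neq; auto.
  destruct (Req_dec_T M0 S0). exfalso; apply SM_neq; auto. lia. Qed.

Lemma new_pos (new : history) p r q : Permutation (map fst new) (inst p r q) -> forall e, In e new -> 0 < fst e.
Proof.
  intros HP e He. assert (Hi : In (fst e) (inst p r q)).
  { apply (Permutation_in _ HP). apply in_map. exact He. }
  pose proof (inst_pos p r q) as F. rewrite Forall_forall in F. apply F in Hi. lra.
Qed.

Lemma cnt_new (new : history) p r q z : Permutation (map fst new) (inst p r q) ->
  cnt z new = count_occ Req_dec_T (inst p r q) z.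
Proof. intros HP. rewrite cnt_count. apply Permutation_count_occ. exact HP. Qed.

Lemma nbins_ge hT new : (nbins hT <= nbins (hT ++ new))%nat.
Proof. rewrite nbins_app. lia. Qed.

Theorem theorem4 :
  forall A : maxmin_alg, valid_alg A ->
  forall m : nat, (0 < m)%nat ->
  exists (I : list R) (k : nat),
    valid_items I /\ sorted_input I /\ is_OPT I k /\ (m < k)%nat /\
    INR (ALG A I) > 16 / 15 * (INR k - 1).
Proof.
  intros A HA m Hm.
  set (T := (4*m + 400)%nat).
  destruct (sim_props A T HA) as [Hsum [Hin Hld]].
  assert (HposT : forall e, In e (sim A T) -> 0 <= fst e).
  { intros e He; destruct (Hin e He) as [E|E]; rewrite E; unfold B0, S0; lra. }
  assert (HbinK : forall e, In e (sim A T) -> (snd e < nbins (sim A T))%nat).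
  { intros; apply nbins_spec; auto. }
  destruct (scen A HA T 0 (cnt S0 (sim A T) + 1) ltac:(lia)) as [newa [Ea [Pa La]]].
  destruct (scen A HA T (2 * (cnt S0 (sim A T) + 1)) (cnt S0 (sim A T) + 1) ltac:(lia)) as [newc [Ec [Pc Lc]]].
  assert (HcM : (cnt M0 newc <= sumn (nbins (sim A T)) (fun i => kM (cbin B0 (sim A T) i) (cbin S0 (sim A T) i))
               + (nbins (sim A T ++ newc) - nbins (sim A T)) * kM 0%nat 0%nat)%nat).
  { apply scen_count. intros i. apply kM_bound.
    pose proof (final_bin (sim A T) newc i Hin (new_pos _ _ _ _ Pc) (Lc i)). lia. }
  rewrite (cnt_new _ _ _ _ _ Pc), count_inst_M in HcM.
  set (hT := sim A T) in *.
  set (x := cnt B0 hT) in *. set (y := cnt S0 hT) in *. set (K := nbins hT) in *.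
  set (bT := fun i => cbin B0 hT i). set (sT := fun i => cbin S0 hT i).
  assert (Hpat : forall i, (i < K)%nat -> (8 * bT i + 6 * sT i <= 20)%nat).
  { intros i _. pose proof (load_ge hT i HposT). pose proof (Hld i).
    assert (X := bin_nat (cbin B0 hT i) (cbin S0 hT i) (cbin M0 hT i) ltac:(lra)). unfold bT, sT. lia. }
  set (N := Npat K bT sT).
  assert (HK : K = pat_sum N (fun _ _ => 1%nat)).
  { unfold N. rewrite <- decomp by auto. rewrite sumn_const. lia. }
  assert (Hx : x = pat_sum N (fun b _ => b)).
  { unfold N. rewrite <- (decomp K bT sT (fun b _ => b)) by auto.
    unfold x. rewrite <- (sumn_cbin B0 hT K HbinK). apply sumn_ext. reflexivity. }
  assert (Hy : y = pat_sum N (fun _ s => s)).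
  { unfold N. rewrite <- (decomp K bT sT (fun _ s => s)) by auto.
    unfold y. rewrite <- (sumn_cbin S0 hT K HbinK). apply sumn_ext. reflexivity. }
  assert (HS : sumn K (fun i => kS (cbin B0 hT i) (cbin S0 hT i)) = pat_sum N kS).
  { unfold N. rewrite <- (decomp K bT sT kS) by auto. reflexivity. }
  assert (HM : sumn K (fun i => kM (cbin B0 hT i) (cbin S0 hT i)) = pat_sum N kM).
  { unfold N. rewrite <- (decomp K bT sT kM) by auto. reflexivity. }
  rewrite pat_one in HK. rewrite pat_b in Hx. rewrite pat_s in Hy. rewrite pat_kS in HS. rewrite pat_kM in HM.
  rewrite HM in HcM. change (kM 0 0) with 2%nat in HcM.
  destruct (pack_c (x+1) (y+1)) as [kc0 [Fc Bc]].
  destruct (opt_exists _ _ Fc) as [kc [Oc Lkc]].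
  assert (Hmc : (m < kc)%nat).
  { apply (opt_big _ _ _ Oc (inst_ge _ _ _)). rewrite length_inst. unfold T in Hsum. lia. }
  assert (HKc := nbins_ge hT newc).
  replace (y + 1 - y)%nat with 1%nat in Pc by lia.
  assert (Hoa : exists ka, is_OPT (inst (x+1) 0 (y+1)) ka /\ (m < ka)%nat /\
     ((y <= 2*x+1)%nat -> (4*ka <= 2*(x+1) + (y+1) + 8)%nat) /\
     ((2*x+1 < y)%nat -> (3*ka <= x+y+5)%nat)).
  { destruct (Nat.le_gt_cases y (2*x+1)) as [Hr|Hr].
    - destruct (pack_a0 (x+1) (y+1) ltac:(lia)) as [k0 [F0 B0']].
      destruct (opt_exists _ _ F0) as [ka [Oa La']]. exists ka. split; [auto|]. split.
      apply (opt_big _ _ _ Oa (inst_ge _ _ _)). rewrite length_inst. unfold T in Hsum. lia.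
      split; intros; lia.
    - destruct (pack_a1 (x+1) (y+1) ltac:(lia)) as [k0 [F0 B0']].
      destruct (opt_exists _ _ F0) as [ka [Oa La']]. exists ka. split; [auto|]. split.
      apply (opt_big _ _ _ Oa (inst_ge _ _ _)). rewrite length_inst. unfold T in Hsum. lia.
      split; intros; lia. }
  destruct Hoa as [ka [Oa [Hma [Ba0 Ba1]]]].
  assert (HKa := nbins_ge hT newa).
  destruct (lt_dec (16*ka) (15 * ALG A (inst (x+1) 0 (y+1)) + 16)) as [Wa|Wa].
  { exists (inst (x+1) 0 (y+1)), ka. split. apply valid_inst. split. apply sorted_inst.
    split. exact Oa. split. exact Hma. apply real_conv. exact Wa. }
  destruct (lt_dec (16*kc) (15 * ALG A (inst (x+1) (2*(y+1)) (y+1)) + 16)) as [Wc|Wc].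
  { exists (inst (x+1) (2*(y+1)) (y+1)), kc. split. apply valid_inst. split. apply sorted_inst.
    split. exact Oc. split. exact Hmc. apply real_conv. exact Wc. }
  destruct (Nat.le_gt_cases y (2*x+1)) as [Hr|Hr].
  2:{ exfalso. apply (core (N 0%nat 0%nat) (N 1%nat 0%nat) (N 2%nat 0%nat) (N 0%nat 1%nat) (N 0%nat 2%nat) (N 0%nat 3%nat) (N 1%nat 1%nat) (N 1%nat 2%nat) K x y
        (ALG A (inst (x+1) 0 (y+1))) ka K 0%nat (ALG A (inst (x+1) (2*(y+1)) (y+1))) kc);
      try lia. }
  destruct (scen A HA T 0 (2 * (x + 1)) ltac:(fold hT y; lia)) as [newb [Eb [Pb Lb]]].
  fold hT x y in Eb, Pb, Lb.
  assert (HbS : (cnt S0 newb <= sumn K (fun i => kS (cbin B0 hT i) (cbin S0 hT i))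
               + (nbins (hT ++ newb) - K) * kS 0%nat 0%nat)%nat).
  { apply scen_count. intros i. apply kS_bound.
    pose proof (final_bin hT newb i Hin (new_pos _ _ _ _ Pb) (Lb i)). lia. }
  rewrite (cnt_new _ _ _ _ _ Pb), count_inst_S in HbS.
  rewrite HS in HbS. change (kS 0 0) with 3%nat in HbS.
  assert (HKb := nbins_ge hT newb).
  pose proof (pack_b (x+1)) as Fb.
  destruct (opt_exists _ _ Fb) as [kb [Ob Lkb]].
  assert (Hmb : (m < kb)%nat).
  { apply (opt_big _ _ _ Ob (inst_ge _ _ _)). rewrite length_inst. unfold T in Hsum. lia. }
  destruct (lt_dec (16*kb) (15 * ALG A (inst (x+1) 0 (2*(x+1))) + 16)) as [Wb|Wb].
  { exists (inst (x+1) 0 (2*(x+1))), kb. split. apply valid_inst. split. apply sorted_inst.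
    split. exact Ob. split. exact Hmb. apply real_conv. exact Wb. }
  exfalso. apply (core (N 0%nat 0%nat) (N 1%nat 0%nat) (N 2%nat 0%nat) (N 0%nat 1%nat) (N 0%nat 2%nat) (N 0%nat 3%nat) (N 1%nat 1%nat) (N 1%nat 2%nat) K x y
        (ALG A (inst (x+1) 0 (y+1))) ka (ALG A (inst (x+1) 0 (2*(x+1)))) kb (ALG A (inst (x+1) (2*(y+1)) (y+1))) kc);
      try lia.
Qed.
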